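(* Let $M$ be a monoid generated by a finite set $A$, and let $H$ be an $\mathcal{H}$-class of $M$. If the $\mathcal{R}$-class $R$ containing $H$ contains only finitely many $\mathcal{H}$-classes, then the Schützenberger group $\mathcal{G}(H)$ of $H$ is finitely generated and (equipped with a word metric with respect to a finite generating set) is quasi-isometric to the Schützenberger graph $\Gamma(R,A)$.
   Context: Green's relations on a monoid $M$: $x\mathcal{R}y$ iff $xM=yM$; $x\mathcal{L}y$ iff $Mx=My$; $\mathcal{H}=\mathcal{R}\cap\mathcal{L}$. For an $\mathcal{H}$-class $H$, let $\mathrm{Stab}(H)=\{s\in M: sH=H\}$ and $\sigma$ the congruence on it given by $x\,\sigma\,y$ iff $xh=yh$ for all $h\in H$; the (left) Schützenberger group is the group $\mathcal{G}(H)=\mathrm{Stab}(H)/\sigma$. It acts on the $\mathcal{R}$-class $R\supseteq H$ by $(s/\sigma)\cdot r=sr$. Semimetric space: a set with $d:X\times X\to\mathbb{R}^{\ge0}\cup\{\infty\}$, $d(x,y)=0$ iff $x=y$, triangle inequality (not necessarily symmetric). For a directed graph $\Gamma$ with vertex set $V$, edge set $E$, source and target maps $\iota,\tau$, define the semimetric space $\Gamma^*$ with point set $V\cup(E\times(0,1))$: for vertices $x,y$, $d(x,y)$ is the least number of edges in a directed path from $x$ to $y$ ($\infty$ if none); $d((e,\mu),y)=(1-\mu)+d(\tau(e),y)$; $d(x,(e,\mu))=d(x,\iota(e))+\mu$; $d((e,\mu),(f,\nu))=\nu-\mu$ if $e=f$ and $\nu\ge\mu$, and $d(\tau(e),\iota(f))+(1-\mu)+\nu$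 otherwise. The Schützenberger graph $\Gamma(R,A)$ is $\Delta^*$ where $\Delta$ is the directed graph with vertex set $R$ and an edge labelled $a$ from $x$ to $y$ whenever $x,y\in R$, $a\in A$, $xa=y$. A map $f:X\to X'$ of semimetric spaces is a quasi-isometry if there are constants $1\le\lambda<\infty$, $0<\epsilon<\infty$, $0\le\mu<\infty$ with $\frac1\lambda d(x,y)-\epsilon\le d'(f(x),f(y))\le\lambda d(x,y)+\epsilon$ for all $x,y$, and for every $x'\in X'$ some $x\in X$ with $\max(d'(x',f(x)),d'(f(x),x'))\le\mu$. A finitely generated group $G$ is regarded as a semimetric space via $d_S(g,h)=\min\{n:h=gs_1\cdots s_n, s_i\in S\}$ for a finite set $S$ generating $G$ as a monoid. *)

(* Defs.v *)
From Stdlib Require Import Reals List ClassicalEpsilon.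
From Coquelicot Require Import Coquelicot.
Set Implicit Arguments.
Open Scope R_scope.

Record Monoid := {
  carrier :> Type;
  mul : carrier -> carrier -> carrier;
  one : carrier;
  mulA : forall x y z, mul x (mul y z) = mul (mul x y) z;
  mul1m : forall x, mul one x = x;
  mulm1 : forall x, mul x one = x }.

Section Green.
Variable M : Monoid.
Local Notation "x * y" := (mul M x y).

Definition wprod (w : list M) : M := fold_right (mul M) (one M) w.

Definition generates (A : list M) : Prop :=
  forall m : M, exists w : list M, (forall a, In a w -> In a A) /\ m = wprod w.

Definition Rrel (x y : M) : Prop := (exists u, y = x * u) /\ (exists v, x = y * v).
Definition Lrel (x y : M) : Prop := (exists u, y = u * x) /\ (exists v, x = v * y).
Definition Hrel (x y : M) : Prop := Rrel x y /\ Lrel x y.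

Definition is_Hclass (H : M -> Prop) : Prop :=
  exists h, forall x, H x <-> Hrel x h.

Definition Rclass_of (H : M -> Prop) (x : M) : Prop :=
  exists h, H h /\ Rrel x h.

Definition finitely_many_Hclasses_in_R (H : M -> Prop) : Prop :=
  exists l : list M, forall x, Rclass_of H x -> exists y, In y l /\ Hrel x y.

Definition Stab (H : M -> Prop) (s : M) : Prop :=
  (forall h, H h -> H (s * h)) /\
  (forall h', H h' -> exists h, H h /\ s * h = h').

Definition schutz_sigma (H : M -> Prop) (x y : M) : Prop :=
  forall h, H h -> x * h = y * h.

(* S (a finite list of elements of Stab(H)) is a set of representatives whose
   schutz_sigma-classes generate the Schützenberger group G(H) = Stab(H)/schutz_sigma as a monoid *)
Definition gen_set (H : M -> Prop) (S : list M) : Prop :=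
  (forall s, In s S -> Stab H s) /\
  (forall g, Stab H g ->
     exists w, (forall s, In s w -> In s S) /\ schutz_sigma H g (wprod w)).

(* word (semi)metric d_S on G(H), computed on representatives in Stab(H):
   d_S([g],[h]) = min { n | [h] = [g][s_1]...[s_n], s_i in S } (+oo if none) *)
Definition word_dist (H : M -> Prop) (S : list M) (g h : M) : Rbar :=
  Glb_Rbar (fun r => exists w : list M,
     (forall s, In s w -> In s S) /\ r = INR (length w) /\ schutz_sigma H h (g * wprod w)).

(* Vertices of Δ: elements of R; edges: pairs (x,a) with x ∈ R, a ∈ A, xa ∈ R,
   from ι(x,a) = x to τ(x,a) = xa, labelled a. *)

Inductive reach (Rc : M -> Prop) (A : list M) : nat -> M -> M -> Prop :=
| reach0 : forall x, Rc x -> reach Rc A 0 x x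
| reachS : forall n x a z, Rc x -> In a A -> Rc (x * a) ->
    reach Rc A n (x * a) z -> reach Rc A (S n) x z.

Definition vdist (Rc : M -> Prop) (A : list M) (x y : M) : Rbar :=
  Glb_Rbar (fun r => exists n, r = INR n /\ reach Rc A n x y).

(* points of Δ^*: vertices, and interior points (e, mu) of edges e = (x,a) *)
Inductive gpoint : Type :=
| PV : M -> gpoint
| PE : M -> M -> R -> gpoint.

Definition gvalid (Rc : M -> Prop) (A : list M) (p : gpoint) : Prop :=
  match p with
  | PV x => Rc x
  | PE x a mu => Rc x /\ In a A /\ Rc (x * a) /\ 0 < mu < 1
  end.

Definition gdist (Rc : M -> Prop) (A : list M) (p q : gpoint) : Rbar :=
  match p, q with
  | PV x, PV y => vdist Rc A x y
  | PE x a mu, PV y => Rbar_plus (1 - mu) (vdist Rc A (x * a) y)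
  | PV x, PE y b nu => Rbar_plus (vdist Rc A x y) nu
  | PE x a mu, PE y b nu =>
      if excluded_middle_informative (x = y /\ a = b /\ mu <= nu)
      then Finite (nu - mu)
      else Rbar_plus (Rbar_plus (vdist Rc A (x * a) y) (1 - mu)) nu
  end.

End Green.

Definition is_quasi_isometry {X Y : Type}
  (VX : X -> Prop) (dX : X -> X -> Rbar) (VY : Y -> Prop) (dY : Y -> Y -> Rbar)
  (f : X -> Y) : Prop :=
  (forall x, VX x -> VY (f x)) /\
  exists lam eps mu : R, 1 <= lam /\ 0 < eps /\ 0 <= mu /\
   (forall x y, VX x -> VX y ->
      Rbar_le (Rbar_minus (Rbar_mult (/ lam) (dX x y)) eps) (dY (f x) (f y)) /\
      Rbar_le (dY (f x) (f y)) (Rbar_plus (Rbar_mult lam (dX x y)) eps)) /\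
   (forall y, VY y -> exists x, VX x /\
      Rbar_le (dY y (f x)) mu /\ Rbar_le (dY (f x) y) mu).

Arguments wprod {M} w.
Arguments generates {M} A.
Arguments Rrel {M} x y.
Arguments Lrel {M} x y.
Arguments Hrel {M} x y.
Arguments is_Hclass {M} H.
Arguments Rclass_of {M} H x.
Arguments finitely_many_Hclasses_in_R {M} H.
Arguments Stab {M} H s.
Arguments schutz_sigma {M} H x y.
Arguments gen_set {M} H S.
Arguments word_dist {M} H S g h.
Arguments vdist {M} Rc A x y.
Arguments gvalid {M} Rc A p.
Arguments gdist {M} Rc A p q.

(* Main.v *)
Require Import Defs.
From Stdlib Require Import Reals List Lia Lra Classical ClassicalEpsilon.
From Coquelicot Require Import Coquelicot.


Lemma nat_min (P : nat -> Prop) n0 : P n0 -> exists m, P m /\ forall n, P n -> (m <= n)%nat.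
Proof.
  intros H0. apply NNPP. intros Hno.
  assert (forall n k, (k <= n)%nat -> ~ P k).
  { induction n; intros k Hk Pk.
    - apply Hno. exists k. split; auto. intros; lia.
    - destruct (Nat.eq_dec k (S n)) as [->|Hne].
      + apply Hno. exists (S n). split; auto. intros n' Pn'. destruct (Compare_dec.le_lt_dec (S n) n'); auto.
        exfalso. apply (IHn n'); auto; lia.
      + apply (IHn k); auto; lia. }
  apply (H n0 n0); auto.
Qed.

Lemma glb_nat (E : R -> Prop) n0 : E (INR n0) -> (forall r, E r -> exists n, r = INR n) ->
  exists m, (m <= n0)%nat /\ E (INR m) /\ Glb_Rbar E = Finite (INR m).
Proof.
  intros H0 Hn. destruct (@nat_min (fun n => E (INR n)) n0 H0) as [m [Pm Hm]].
  exists m. split; [apply Hm; auto|]. split; auto.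
  apply is_glb_Rbar_unique. split.
  - intros r Er. destruct (Hn r Er) as [k ->]. simpl. apply le_INR. apply Hm; auto.
  - intros b Hb. apply Hb. auto.
Qed.

Lemma glb_empty (E : R -> Prop) : (forall r, ~ E r) -> Glb_Rbar E = p_infty.
Proof.
  intros HE. apply is_glb_Rbar_unique. split.
  - intros r Er. exfalso; eapply HE; eauto.
  - intros b _. destruct b; simpl; auto.
Qed.

Lemma list_bound (T : Type) (L : list T) (Q : T -> nat -> Prop) :
  (forall e, In e L -> exists n, Q e n) -> exists N, forall e, In e L -> exists n, (n <= N)%nat /\ Q e n.
Proof.
  induction L as [|a L IH]; intros HQ.
  - exists 0%nat. intros e [].
  - destruct (HQ a (or_introl eq_refl)) as [na Qa].
    destruct IH as [N HN]. intros; apply HQ; simpl; auto.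
    exists (Nat.max na N). intros e [<-|He].
    + exists na; split; auto; lia.
    + destruct (HN e He) as [n [Hn Qn]]. exists n; split; auto; lia.
Qed.

Set Implicit Arguments. Unset Strict Implicit.
Section Main.
Variable M : Monoid.
Variable A : list M.
Variable H : M -> Prop.
Variable h0 : M.
Variable l : list M.
Hypothesis Hgen : generates A.
Hypothesis HH : forall x, H x <-> Hrel x h0.
Hypothesis Hl : forall x, Rclass_of H x -> exists y, In y l /\ Hrel x y.

Local Infix "**" := (mul M) (at level 40, left associativity).
Local Notation Rc := (Rclass_of H).
Implicit Types (x y z a b u v g k h s r d : M) (w : list M).

Lemma Rrel_refl x : Rrel x x.
Proof. split; exists (Defs.one M); now rewrite Defs.mulm1. Qed.
Lemma Rrel_sym x y : Rrel x y -> Rrel y x.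
Proof. intros [a b]; split; auto. Qed.
Lemma Rrel_trans x y z : Rrel x y -> Rrel y z -> Rrel x z.
Proof.
  intros [[u Hu] [v Hv]] [[u' Hu'] [v' Hv']]; split.
  - exists (u ** u'). subst. now rewrite Defs.mulA.
  - exists (v' ** v). rewrite Defs.mulA, <- Hv'; auto.
Qed.
Lemma Lrel_refl x : Lrel x x.
Proof. split; exists (Defs.one M); now rewrite Defs.mul1m. Qed.
Lemma Lrel_sym x y : Lrel x y -> Lrel y x.
Proof. intros [a b]; split; auto. Qed.
Lemma Lrel_trans x y z : Lrel x y -> Lrel y z -> Lrel x z.
Proof.
  intros [[u Hu] [v Hv]] [[u' Hu'] [v' Hv']]; split.
  - exists (u' ** u). subst. now rewrite Defs.mulA.
  - exists (v ** v'). rewrite <- Defs.mulA, <- Hv'; auto.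
Qed.

Lemma H_h0 : H h0.
Proof. apply HH. split; [apply Rrel_refl|apply Lrel_refl]. Qed.

Lemma Rc_iff x : Rc x <-> Rrel x h0.
Proof.
  split.
  - intros [h [Hh Hr]]. apply HH in Hh. eapply Rrel_trans; eauto. apply Hh.
  - intros Hr. exists h0; split; auto. apply H_h0.
Qed.

Lemma H_Rc x : H x -> Rc x.
Proof. intros Hx. apply Rc_iff. apply HH in Hx. apply Hx. Qed.

Lemma green a b u u' : H a -> H b -> b = u ** a -> a = u' ** b ->
  forall x, H x -> H (u ** x) /\ u' ** (u ** x) = x.
Proof.
  intros Ha Hb Hba Hab x Hx.
  assert (Rax : Rrel a x).
  { apply HH in Ha; apply HH in Hx. eapply Rrel_trans. apply Ha. apply Rrel_sym, Hx. }
  destruct Rax as [[r Hr] [r' Hr']].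
  assert (E1 : u ** x = b ** r) by (rewrite Hr, Defs.mulA, <- Hba; auto).
  assert (E2 : u' ** (u ** x) = x) by (rewrite E1, Defs.mulA, <- Hab; auto).
  split; auto.
  apply HH. split.
  - apply Rrel_trans with b.
    + rewrite E1. split. exists r'. rewrite <- Defs.mulA.
      assert (a = a ** (r ** r')) by (rewrite Defs.mulA, <- Hr; auto).
      rewrite Hba at 1. rewrite H0 at 1. rewrite Defs.mulA. rewrite <- Hba. auto.
      exists r; auto.
    + apply HH in Hb; apply Hb.
  - apply Lrel_trans with x.
    + split. exists u'. auto. exists u. auto.
    + apply HH in Hx; apply Hx.
Qed.

Lemma Stab_of_L a b u u' : H a -> H b -> b = u ** a -> a = u' ** b -> Stab H u.
Proof.
  intros Ha Hb E1 E2. split.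
  - intros x Hx. apply (green Ha Hb E1 E2 Hx).
  - intros x' Hx'. destruct (green Hb Ha E2 E1 Hx') as [Hu Heq].
    exists (u' ** x'). split; auto.
Qed.

Lemma stab_to h : H h -> exists g, Stab H g /\ g ** h0 = h.
Proof.
  intros Hh. pose proof Hh as Hh'. apply HH in Hh' as [_ [[v Hv] [u Hu]]].
  exists u. split; auto. eapply Stab_of_L with (a := h0) (b := h); eauto. apply H_h0.
Qed.

Lemma stab_from h : H h -> exists g, Stab H g /\ g ** h = h0.
Proof.
  intros Hh. pose proof Hh as Hh'. apply HH in Hh' as [_ [[v Hv] [u Hu]]].
  exists v. split; auto. eapply Stab_of_L with (a := h) (b := h0); eauto. apply H_h0.
Qed.

Lemma sigma_of a b : a ** h0 = b ** h0 -> schutz_sigma H a b.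
Proof.
  intros E x Hx. apply HH in Hx as [[_ [r Hr]] _].
  rewrite Hr, !Defs.mulA, E. auto.
Qed.

Lemma of_sigma a b : schutz_sigma H a b -> a ** h0 = b ** h0.
Proof. intros S. apply S, H_h0. Qed.

Lemma Stab_one : Stab H (Defs.one M).
Proof. split; intros h Hh; rewrite ?Defs.mul1m; auto. exists h; rewrite Defs.mul1m; auto. Qed.

Lemma Stab_mul g k : Stab H g -> Stab H k -> Stab H (g ** k).
Proof.
  intros [G1 G2] [K1 K2]; split.
  - intros h Hh. rewrite <- Defs.mulA. auto.
  - intros h' Hh'. destruct (G2 h' Hh') as [h1 [Hh1 E1]].
    destruct (K2 h1 Hh1) as [h2 [Hh2 E2]]. exists h2; split; auto.
    rewrite <- Defs.mulA, E2; auto.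
Qed.

Lemma wprod_app (w1 w2 : list M) : wprod (w1 ++ w2) = wprod w1 ** wprod w2.
Proof. induction w1; simpl. now rewrite Defs.mul1m. rewrite IHw1, Defs.mulA; auto. Qed.

Lemma Stab_wprod (S : list M) w : (forall s, In s S -> Stab H s) ->
  (forall s, In s w -> In s S) -> Stab H (wprod w).
Proof.
  intros HS. induction w; intros Hw; simpl. apply Stab_one.
  apply Stab_mul; auto. apply HS, Hw; simpl; auto. apply IHw. intros; apply Hw; simpl; auto.
Qed.

Lemma Stab_H g h : Stab H g -> H h -> H (g ** h).
Proof. intros [G _] Hh; auto. Qed.

Lemma Stab_Rc g x : Stab H g -> Rc x -> Rc (g ** x).
Proof.
  intros Hg Hx. apply Rc_iff in Hx. apply Rc_iff.
  assert (Hgh : H (g ** h0)) by (apply Stab_H; auto; apply H_h0).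
  apply Rrel_trans with (g ** h0).
  - destruct Hx as [[u Hu] [v Hv]]. split.
    exists u; rewrite Hu, Defs.mulA; auto. exists v; rewrite Hv at 1; rewrite Defs.mulA; auto.
  - apply HH in Hgh; apply Hgh.
Qed.

Lemma Stab_inv g : Stab H g -> exists d, Stab H d /\ forall x, Rc x -> d ** (g ** x) = x.
Proof.
  intros Hg. destruct (stab_from (Stab_H Hg H_h0)) as [d [Hd E]].
  exists d; split; auto. intros x Hx. apply Rc_iff in Hx as [_ [r Hr]].
  rewrite Hr, !Defs.mulA, <- (Defs.mulA _ d g h0), E. auto.
Qed.

Lemma Rc_back g y a : Stab H g -> Rc y -> Rc (g ** (y ** a)) -> Rc (y ** a).
Proof.
  intros Hg Hy Hga. destruct (Stab_inv Hg) as [d [Hd Ed]].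
  assert (E : d ** (g ** (y ** a)) = y ** a).
  { rewrite Defs.mulA, Defs.mulA, <- (Defs.mulA _ d g y), Ed; auto. }
  rewrite <- E. apply Stab_Rc; auto.
Qed.


Definition Y := h0 :: l.

Lemma decomp x : Rc x -> exists g y, Stab H g /\ In y Y /\ Rc y /\ x = g ** y.
Proof.
  intros Hx. destruct (Hl Hx) as [y [Hy [[[u' Hu'] [u Hu]] [[m' Hm'] [m Hm]]]]].
  assert (Ry : Rc y).
  { apply Rc_iff. apply Rc_iff in Hx. eapply Rrel_trans; [|apply Hx]. split; eauto. }
  pose proof Ry as Ry'. apply Rc_iff in Ry' as [[p Hp] [v Hv]].
  assert (Hxv : x = (x ** p) ** v).
  { rewrite Hm at 1. rewrite Hv at 1. rewrite Hp. rewrite !Defs.mulA. rewrite <- Hm. auto. }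
  assert (Hxp : H (x ** p)).
  { apply HH. split.
    - apply Rrel_trans with x.
      + split. exists v. auto. exists p; auto.
      + apply Rc_iff; auto.
    - split. exists m'. rewrite Hp, Hm', Defs.mulA; auto.
      exists m. rewrite Hm at 1. rewrite <- Defs.mulA, <- Hp; auto. }
  destruct (stab_to Hxp) as [g [Hg Eg]].
  exists g, y. split; [exact Hg|]. split; [unfold Y; simpl; auto|]. split; [exact Ry|].
  rewrite Hv, Defs.mulA, Eg. auto.
Qed.

Lemma dec_ex x : exists p : M * M, Stab H (fst p) /\
  (Rc x -> In (snd p) Y /\ Rc (snd p) /\ x = fst p ** snd p).
Proof.
  destruct (classic (Rc x)) as [Hx|Hx].
  - destruct (decomp Hx) as [g [y [Hg [Hy [Ry E]]]]]. exists (g, y); simpl; auto.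
  - exists (Defs.one M, h0). split. apply Stab_one. tauto.
Qed.
Definition dec x : M * M := proj1_sig (constructive_indefinite_description _ (dec_ex x)).
Lemma dec_spec x : Stab H (fst (dec x)) /\
  (Rc x -> In (snd (dec x)) Y /\ Rc (snd (dec x)) /\ x = fst (dec x) ** snd (dec x)).
Proof. unfold dec. destruct (constructive_indefinite_description _ _); simpl; auto. Qed.

Lemma stabof_ex y : exists g, Stab H g /\ (H y -> g ** h0 = y).
Proof.
  destruct (classic (H y)) as [Hy|Hy].
  - destruct (stab_to Hy) as [g [Hg E]]. exists g; auto.
  - exists (Defs.one M). split. apply Stab_one. tauto.
Qed.
Definition stabof y : M := proj1_sig (constructive_indefinite_description _ (stabof_ex y)).
Lemma stabof_spec y : Stab H (stabof y) /\ (H y -> stabof y ** h0 = y).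
Proof. unfold stabof. destruct (constructive_indefinite_description _ _); simpl; auto. Qed.

Definition S0 : list M := map stabof Y ++ flat_map (fun y => map (fun a => fst (dec (y ** a))) A) Y.

Lemma S0_Stab s : In s S0 -> Stab H s.
Proof.
  unfold S0. rewrite in_app_iff, in_flat_map. intros [Hs|[y [_ Hs]]]; apply in_map_iff in Hs as [t [<- _]].
  apply stabof_spec. apply dec_spec.
Qed.

Lemma S0_stabof y : In y Y -> In (stabof y) S0.
Proof. intros. unfold S0. apply in_app_iff. left. apply in_map; auto. Qed.
Lemma S0_dec y a : In y Y -> In a A -> In (fst (dec (y ** a))) S0.
Proof.
  intros. unfold S0. apply in_app_iff. right. apply in_flat_map. exists y; split; auto.
  apply in_map with (f := fun a => fst (dec (y ** a))); auto.
Qed.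

Lemma path_word n x z : reach M Rc A n x z -> forall g y, Stab H g -> In y Y -> Rc y -> x = g ** y ->
  exists w y', (forall s, In s w -> In s S0) /\ length w = n /\ In y' Y /\ Rc y' /\ z = (g ** wprod w) ** y'.
Proof.
  induction 1 as [x Hx | n x a z Hx Ha Hxa Hr IH]; intros g y Hg Hy Ry E.
  - exists nil, y. simpl. repeat split; auto. intros s []. rewrite Defs.mulm1; auto.
  - assert (Rya : Rc (y ** a)).
    { apply (Rc_back Hg Ry). rewrite Defs.mulA, <- E. auto. }
    destruct (dec_spec (y ** a)) as [Hs Hd]. destruct (Hd Rya) as [Hy1 [Ry1 E1]].
    assert (G1 : Stab H (g ** fst (dec (y ** a)))) by (apply Stab_mul; auto).
    assert (G2 : x ** a = g ** fst (dec (y ** a)) ** snd (dec (y ** a)))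
      by (rewrite E, <- !Defs.mulA; f_equal; exact E1).
    destruct (IH _ _ G1 Hy1 Ry1 G2) as [w [y' [Hw [Hlen [Hy' [Ry' Ez]]]]]].
    exists (fst (dec (y ** a)) :: w), y'. repeat split; auto.
    + intros s [<-|Hin]; auto. apply S0_dec; auto.
    + simpl; auto.
    + rewrite Ez. simpl. rewrite Defs.mulA; auto.
Qed.

Lemma path_word_end n g k : Stab H g -> Stab H k -> reach M Rc A n (g ** h0) (k ** h0) ->
  exists w, (forall s, In s w -> In s S0) /\ length w = S n /\ k ** h0 = (g ** wprod w) ** h0.
Proof.
  intros Hg Hk Hr.
  destruct (path_word Hr Hg (y := h0)) as [w [y' [Hw [Hlen [Hy' [Ry' Ez]]]]]]; auto.
  unfold Y; simpl; auto. apply H_Rc, H_h0.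
  assert (HW : Stab H (g ** wprod w)) by (apply Stab_mul; auto; apply (Stab_wprod S0_Stab Hw)).
  assert (Hy'H : H y').
  { destruct (Stab_inv HW) as [d [Hd Ed]]. rewrite <- (Ed y' Ry'), <- Ez.
    apply Stab_H; auto. apply Stab_H; auto. apply H_h0. }
  exists (w ++ stabof y' :: nil). split; [|split].
  - intros s Hs. apply in_app_iff in Hs as [Hs|[<-|[]]]; auto. apply S0_stabof; auto.
  - rewrite length_app; simpl; lia.
  - rewrite wprod_app. simpl. rewrite Defs.mulm1. rewrite Ez.
    rewrite <- (proj2 (stabof_spec y') Hy'H) at 1. rewrite !Defs.mulA. auto.
Qed.


Lemma path_word_gen w : forall x, (forall a, In a w -> In a A) -> Rc x -> Rc (x ** wprod w) ->
  reach M Rc A (length w) x (x ** wprod w).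
Proof.
  induction w as [|a w IH]; intros x Hw Hx Hxw; simpl in *.
  - rewrite Defs.mulm1. constructor; auto.
  - assert (Hxa : Rc (x ** a)).
    { apply Rc_iff. apply Rc_iff in Hx. apply Rrel_trans with x; auto.
      apply Rc_iff in Hxw. assert (Rrel x (x ** (a ** wprod w))) by
        (apply Rrel_trans with h0; auto; apply Rrel_sym; auto).
      destruct H0 as [_ [m Hm]]. split. exists (wprod w ** m). rewrite Hm at 1. rewrite !Defs.mulA. auto.
      exists a; auto. }
    econstructor; eauto. rewrite Defs.mulA. apply IH; auto. rewrite <- Defs.mulA; auto.
Qed.

Lemma path_exists x z : Rc x -> Rc z -> exists n, reach M Rc A n x z.
Proof.
  intros Hx Hz. assert (Rrel x z) by (apply Rrel_trans with h0; [apply Rc_iff; auto | apply Rrel_sym, Rc_iff; auto]).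
  destruct H0 as [[r Hr] _]. destruct (Hgen r) as [w [Hw Er]].
  exists (length w). rewrite Hr, Er. apply path_word_gen; auto. rewrite <- Er, <- Hr; auto.
Qed.

Lemma reach_Rc n x z : reach M Rc A n x z -> Rc x /\ Rc z.
Proof. induction 1; intuition. Qed.

Lemma reach_trans n x y : reach M Rc A n x y -> forall m z, reach M Rc A m y z -> reach M Rc A (n + m) x z.
Proof. induction 1; intros; simpl; auto. econstructor; eauto. Qed.

Lemma reach_transl g n x z : Stab H g -> reach M Rc A n x z -> reach M Rc A n (g ** x) (g ** z).
Proof.
  intros Hg. induction 1.
  - constructor. apply Stab_Rc; auto.
  - econstructor. apply Stab_Rc; eauto. eauto. rewrite <- Defs.mulA. apply Stab_Rc; eauto.
    rewrite <- Defs.mulA. auto.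
Qed.


Lemma Rbar_le_pinf (r : Rbar) : Rbar_le r p_infty.
Proof. destruct r; simpl; auto. Qed.

Lemma vd_le n x z : reach M Rc A n x z ->
  exists m, (m <= n)%nat /\ reach M Rc A m x z /\ vdist Rc A x z = Finite (INR m).
Proof.
  intros Hr. unfold vdist.
  destruct (@glb_nat (fun (r : R) => exists n, r = INR n /\ reach M Rc A n x z) n) as [m [Hm [[k [Ek Hk]] Eg]]].
  - exists n; auto.
  - intros r [k [-> _]]; eauto.
  - apply INR_eq in Ek. subst. exists k; auto.
Qed.

Lemma vd_none x z : (forall n, ~ reach M Rc A n x z) -> vdist Rc A x z = p_infty.
Proof. intros Hn. unfold vdist. apply glb_empty. intros r [k [_ Hk]]. eapply Hn; eauto. Qed.

Lemma wd_le S g k w : (forall s, In s w -> In s S) -> schutz_sigma H k (g ** wprod w) ->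
  exists w0, (forall s, In s w0 -> In s S) /\ schutz_sigma H k (g ** wprod w0) /\
    (length w0 <= length w)%nat /\ word_dist H S g k = Finite (INR (length w0)).
Proof.
  intros Hw Hs. unfold word_dist.
  destruct (@glb_nat (fun (r : R) => exists w : list M,
     (forall s, In s w -> In s S) /\ r = INR (length w) /\ schutz_sigma H k (g ** wprod w)) (length w))
    as [m [Hm [[w0 [Hw0 [Ew0 Hs0]]] Eg]]].
  - exists w; auto.
  - intros r [w' [_ [-> _]]]; eauto.
  - apply INR_eq in Ew0. subst. exists w0; auto.
Qed.

Lemma up_path S C : (forall s, In s S -> exists n, (n <= C)%nat /\ reach M Rc A n h0 (s ** h0)) ->
  forall w, (forall s, In s w -> In s S) -> (forall s, In s S -> Stab H s) -> forall c, Stab H c ->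
  exists n, (n <= C * length w)%nat /\ reach M Rc A n (c ** h0) (c ** wprod w ** h0).
Proof.
  intros HC w. induction w as [|s w IH]; intros Hw HS c Hc.
  - exists 0%nat. split. lia. simpl. rewrite Defs.mulm1. constructor. apply H_Rc, Stab_H; auto. apply H_h0.
  - destruct (HC s) as [ns [Hns Rs]]. apply Hw; simpl; auto.
    assert (Hs : Stab H s) by (apply HS, Hw; simpl; auto).
    destruct (IH (fun t Ht => Hw t (or_intror Ht)) HS (c ** s)) as [m [Hm Rm]].
    apply Stab_mul; auto.
    exists (ns + m)%nat. split. simpl length. lia.
    apply reach_trans with (c ** s ** h0).
    + rewrite <- Defs.mulA. apply reach_transl; auto.
    + simpl. rewrite Defs.mulA. auto.
Qed.

Lemma conv_word S D : (forall s, In s S -> Stab H s) ->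
  (forall t, In t S0 -> exists w, (length w <= D)%nat /\ (forall s, In s w -> In s S) /\ t ** h0 = wprod w ** h0) ->
  forall w, (forall s, In s w -> In s S0) ->
  exists w', (forall s, In s w' -> In s S) /\ (length w' <= D * length w)%nat /\ wprod w ** h0 = wprod w' ** h0.
Proof.
  intros HS HD w. induction w as [|t w IH]; intros Hw.
  - exists nil. simpl. split; [intros s []|split; auto; lia].
  - destruct IH as [w' [Hw' [Hl' E']]]. intros; apply Hw; simpl; auto.
    destruct (HD t) as [wt [Hlt [Hwt Et]]]. apply Hw; simpl; auto.
    exists (wt ++ w'). split; [|split].
    + intros s Hs. apply in_app_iff in Hs as [|]; auto.
    + rewrite length_app. simpl length. lia.
    + simpl. rewrite <- Defs.mulA, E'. rewrite wprod_app, <- Defs.mulA.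
      apply (sigma_of Et). apply Stab_H. apply (Stab_wprod HS Hw'). apply H_h0.
Qed.

Lemma main_part : (exists S : list M, gen_set H S) /\
  (forall S : list M, gen_set H S ->
     exists f : M -> gpoint M,
       (forall x y, Stab H x -> Stab H y -> schutz_sigma H x y -> f x = f y) /\
       is_quasi_isometry (Stab H) (word_dist H S) (gvalid Rc A) (gdist Rc A) f).
Proof.
  split.
  { exists S0. split. apply S0_Stab. intros g Hg.
    destruct (path_exists (H_Rc H_h0) (H_Rc (Stab_H Hg H_h0))) as [n Hn].
    rewrite <- (Defs.mul1m _ h0) in Hn at 1.
    destruct (path_word_end Stab_one Hg Hn) as [w [Hw [_ E]]].
    exists w. split; auto. apply sigma_of. rewrite E, Defs.mul1m. auto. }
  intros SS [HS Hgs].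
  destruct (@list_bound _ SS (fun s n => reach M Rc A n h0 (s ** h0))) as [C HC].
  { intros s Hs. apply path_exists. apply H_Rc, H_h0. apply H_Rc, Stab_H; auto. apply H_h0. }
  destruct (@list_bound _ S0 (fun t n => exists w, length w = n /\ (forall s, In s w -> In s SS) /\ t ** h0 = wprod w ** h0)) as [D HD].
  { intros t Ht. destruct (Hgs t (S0_Stab Ht)) as [w [Hw Hs]]. exists (length w), w.
    split; auto. split; auto. apply of_sigma; auto. }
  destruct (@list_bound _ Y (fun y n => Rc y -> exists n1 n2, (n1 <= n)%nat /\ (n2 <= n)%nat /\
        reach M Rc A n1 h0 y /\ reach M Rc A n2 y h0)) as [B1 HB1].
  { intros y _. destruct (classic (Rc y)) as [Ry|Ry]; [|exists 0%nat; tauto].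
    destruct (path_exists (H_Rc H_h0) Ry) as [n1 R1]. destruct (path_exists Ry (H_Rc H_h0)) as [n2 R2].
    exists (Nat.max n1 n2). intros _. exists n1, n2. repeat split; auto; lia. }
  destruct (@list_bound _ (list_prod Y A) (fun p n => Rc (fst p ** snd p) -> exists n1, (n1 <= n)%nat /\
        reach M Rc A n1 (fst p ** snd p) h0)) as [B2 HB2].
  { intros p _. destruct (classic (Rc (fst p ** snd p))) as [Ry|Ry]; [|exists 0%nat; tauto].
    destruct (path_exists Ry (H_Rc H_h0)) as [n1 R1]. exists n1. intros _. exists n1; auto. }
  set (B := Nat.max B1 B2).
  exists (fun g => @PV M (g ** h0)). split.
  { intros x y Hx Hy Hs. f_equal. apply of_sigma; auto. }
  split.
  { intros x Hx. simpl. apply H_Rc, Stab_H; auto. apply H_h0. }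
  exists ((INR (C + D) + 1)), 1, (INR B + 1).
  assert (HB : (B1 <= B)%nat /\ (B2 <= B)%nat) by (unfold B; lia).
  assert (Hlam : 1 <= (INR (C + D) + 1)) by (pose proof (pos_INR (C + D)); lra).
  split; [exact Hlam|]. split; [lra|]. split; [pose proof (pos_INR B); lra|]. split.
  - intros x y Hx Hy.
    assert (Hex : exists w, (forall s, In s w -> In s SS) /\ schutz_sigma H y (x ** wprod w)).
    { destruct (proj2 Hx (y ** h0) (Stab_H Hy H_h0)) as [h' [Hh' Eh']].
      destruct (Stab_inv Hx) as [d [Hd Ed]].
      destruct (Hgs (d ** y) (Stab_mul Hd Hy)) as [w [Hw Hs]].
      exists w. split; auto. apply sigma_of. apply of_sigma in Hs.
      rewrite <- Defs.mulA, <- Hs, <- Defs.mulA, <- Eh', Ed; auto. apply H_Rc; auto. }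
    destruct Hex as [w Hw]. destruct Hw as [Hw Hsw].
    destruct (wd_le Hw Hsw) as [w0 [Hw0 [Hs0 [_ Ed0]]]].
    split.
    +
      destruct (classic (exists n, reach M Rc A n (x ** h0) (y ** h0))) as [[n Rn]|Hno].
      * destruct (vd_le Rn) as [m1 [_ [Rm1 Ev]]].
        destruct (path_word_end Hx Hy Rm1) as [w1 [Hw1 [Hl1 E1]]].
        destruct (conv_word HS (D := D)) with (w := w1) as [w' [Hw' [Hl' E']]]; auto.
        { intros t Ht. destruct (HD t Ht) as [n' [Hn' [w2 [Hl2 [Hw2 E2]]]]]. exists w2. split; [lia|auto]. }
        assert (Hs' : schutz_sigma H y (x ** wprod w')).
        { apply sigma_of. rewrite E1, <- !Defs.mulA, E'. auto. }
        destruct (wd_le Hw' Hs') as [w3 [_ [_ [Hl3 Ed3]]]].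
        cbn [gdist]. rewrite Ed3, Ev. simpl.
        assert (Hle : INR (length w3) <= (INR (C + D) + 1) * INR (S m1)).
        { apply Rle_trans with (INR (D * S m1)). apply le_INR. rewrite Hl1 in Hl'. lia.
          rewrite mult_INR. apply Rmult_le_compat_r. apply pos_INR. apply Rle_trans with (INR (C + D)); [apply le_INR; lia|lra]. }
        assert (Hpos : 0 < (INR (C + D) + 1)) by lra.
        apply Rle_trans with (/ (INR (C + D) + 1) * ((INR (C + D) + 1) * INR (S m1)) - 1).
        { apply Rplus_le_compat_r. apply Rmult_le_compat_l; auto. left. apply Rinv_0_lt_compat; auto. }
        rewrite <- Rmult_assoc, Rinv_l, Rmult_1_l, S_INR. lra. lra.
      * cbn [gdist]. rewrite (vd_none (x := x ** h0) (z := y ** h0)). apply Rbar_le_pinf.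
        intros n Rn; apply Hno; eauto.
    +
      assert (HC' : forall s, In s SS -> exists n, (n <= C)%nat /\ reach M Rc A n h0 (s ** h0)).
      { intros s Hs. destruct (HC s Hs) as [n [Hn Rn]]. eauto. }
      destruct (up_path HC' Hw0 HS Hx) as [n [Hn Rn]].
      assert (E0 : x ** wprod w0 ** h0 = y ** h0) by (symmetry; apply of_sigma; auto).
      rewrite E0 in Rn.
      destruct (vd_le Rn) as [m1 [Hm1 [_ Ev]]].
      cbn [gdist]. rewrite Ev, Ed0. simpl.
      assert (INR m1 <= INR (C * length w0)) by (apply le_INR; lia).
      rewrite mult_INR in H0.
      assert (INR C * INR (length w0) <= (INR (C + D) + 1) * INR (length w0)).
      { apply Rmult_le_compat_r. apply pos_INR. apply Rle_trans with (INR (C + D)); [apply le_INR; lia|lra]. }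
      lra.
  - intros p Hp. destruct p as [x | x a mu].
    + simpl in Hp. destruct (decomp Hp) as [g [y0 [Hg [Hy0 [Ry0 Ex]]]]].
      destruct (HB1 y0 Hy0) as [n [Hn Hq]]. destruct (Hq Ry0) as [n1 [n2 [Hn1 [Hn2 [R1 R2]]]]].
      exists g. split; auto.
      apply (reach_transl Hg) in R1. apply (reach_transl Hg) in R2. rewrite <- Ex in R1, R2.
      destruct (vd_le R1) as [m1 [Hm1 [_ Ev1]]]. destruct (vd_le R2) as [m2 [Hm2 [_ Ev2]]].
      cbn [gdist]. rewrite Ev1, Ev2. simpl.
      assert (INR m1 <= INR B) by (apply le_INR; lia).
      assert (INR m2 <= INR B) by (apply le_INR; lia). lra.
    + simpl in Hp. destruct Hp as [Hx [Ha [Hxa Hmu]]].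
      destruct (decomp Hx) as [g [y0 [Hg [Hy0 [Ry0 Ex]]]]].
      assert (Rya : Rc (y0 ** a)).
      { apply (Rc_back Hg Ry0). rewrite Defs.mulA, <- Ex; auto. }
      destruct (HB1 y0 Hy0) as [n [Hn Hq]]. destruct (Hq Ry0) as [n1 [n2 [Hn1 [Hn2 [R1 R2]]]]].
      destruct (HB2 (y0, a) (in_prod _ _ _ _ Hy0 Ha)) as [n' [Hn' Hq']].
      cbn [fst snd] in Hq'. destruct (Hq' Rya) as [n3 [Hn3 R3]].
      exists g. split; auto.
      apply (reach_transl Hg) in R1. rewrite <- Ex in R1.
      apply (reach_transl Hg) in R3. rewrite Defs.mulA, <- Ex in R3.
      destruct (vd_le R1) as [m1 [Hm1 [_ Ev1]]]. destruct (vd_le R3) as [m3 [Hm3 [_ Ev3]]].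
      cbn [gdist]. rewrite Ev1, Ev3. simpl.
      assert (INR m1 <= INR B) by (apply le_INR; lia).
      assert (INR m3 <= INR B) by (apply le_INR; lia). lra.
Qed.

End Main.

Theorem theorem5p2 (M : Monoid) (A : list M) (H : M -> Prop) :
  generates A -> is_Hclass H -> finitely_many_Hclasses_in_R H ->
  (exists S : list M, gen_set H S) /\
  (forall S : list M, gen_set H S ->
     exists f : M -> gpoint M,
       (forall x y, Stab H x -> Stab H y -> schutz_sigma H x y -> f x = f y) /\
       is_quasi_isometry (Stab H) (word_dist H S)
         (gvalid (Rclass_of H) A) (gdist (Rclass_of H) A) f).
Proof.
  intros Hgen [h0 HH] [l Hl]. exact (main_part Hgen HH Hl).
Qed.
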